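(* Fix an integer $k\geq1$ and $V=\{0,\ldots,k\}$. For Boolean functions $\varphi,\varphi'$ on $V$, we have $\mathrm{eul}(\varphi)=\mathrm{eul}(\varphi')$ if and only if $\varphi\simeq\varphi'$.
   Context: A valuation is a subset $\nu\subseteq V$; $\nu^{(l)}$ is $\nu$ with membership of $l$ flipped. A Boolean function on $V$ is a map $\varphi:2^V\to\{\text{false},\text{true}\}$; $\mathrm{sat}(\varphi)$ is its set of satisfying valuations; $\mathrm{eul}(\varphi)=\sum_{\nu\in\mathrm{sat}(\varphi)}(-1)^{|\nu|}$. Write $\varphi\xrightarrow{+(\nu,l)}\varphi'$ if $\nu,\nu^{(l)}\notin\mathrm{sat}(\varphi)$ and $\mathrm{sat}(\varphi')=\mathrm{sat}(\varphi)\cup\{\nu,\nu^{(l)}\}$, and $\varphi\xrightarrow{-(\nu,l)}\varphi'$ if $\varphi'\xrightarrow{+(\nu,l)}\varphi$. Write $\varphi\xrightarrow{\pm}\varphi'$ if one of these holds for some $\nu,l$; $\simeq$ is the reflexive-transitive closure of $\xrightarrow{\pm}$ (an equivalence relation). *)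

(* Defs.v *)
From mathcomp Require Import all_boot all_order all_algebra.
From Stdlib Require Import Relations.
Set Implicit Arguments. Unset Strict Implicit. Unset Printing Implicit Defensive.
Import GRing.Theory Num.Theory.
Local Open Scope ring_scope.

(* Variables V = {0,...,k} = 'I_k.+1 ; valuations are subsets of V. *)
Definition valuation (k : nat) := {set 'I_k.+1}.

Definition boolfun (k : nat) := {ffun valuation k -> bool}.

Definition flip (k : nat) (nu : valuation k) (l : 'I_k.+1) : valuation k :=
  if l \in nu then nu :\ l else l |: nu.

Definition sat (k : nat) (phi : boolfun k) : {set valuation k} :=
  [set nu | phi nu].

Definition eul (k : nat) (phi : boolfun k) : int :=
  \sum_(nu in sat phi) (-1) ^+ #|nu|.

Definition step_plus (k : nat) (phi phi' : boolfun k) (nu : valuation k)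
    (l : 'I_k.+1) : Prop :=
  nu \notin sat phi /\ flip nu l \notin sat phi /\
  sat phi' = sat phi :|: [set nu; flip nu l].

Definition step_pm (k : nat) (phi phi' : boolfun k) : Prop :=
  exists (nu : valuation k) (l : 'I_k.+1),
    step_plus phi phi' nu l \/ step_plus phi' phi nu l.

Definition equiv_bf (k : nat) : relation (boolfun k) :=
  clos_refl_trans (boolfun k) (@step_pm k).

(* Main.v *)
Require Import Defs.
From mathcomp Require Import all_boot all_order all_algebra.
From Stdlib Require Import Relations Classical.
From mathcomp Require Import zify.
Import GRing.Theory Num.Theory.
Set Implicit Arguments. Unset Strict Implicit.
Local Open Scope ring_scope.

Lemma in_flip k (nu : valuation k) l x : (x \in flip nu l) = ((x \in nu) != (x == l)).
Proof.
rewrite /flip; case: ifP => Hl; rewrite !inE; case: (eqVneq x l) => [->|_]; rewrite ?Hl //=.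
all: by case: (x \in nu).
Qed.

Lemma flip_neq k (nu : valuation k) l : flip nu l != nu.
Proof.
apply/eqP => H; have := in_flip nu l l; rewrite H eqxx; by case: (l \in nu).
Qed.

Lemma flip2_neq k (u : valuation k) a b : a != b -> flip (flip u a) b != u.
Proof.
move=> ab; apply/eqP => H; have := in_flip (flip u a) b a; rewrite H in_flip eqxx (negbTE ab).
by case: (a \in u).
Qed.

Definition D k (u v : valuation k) : {set 'I_k.+1} := [set x | (x \in u) != (x \in v)].

Lemma D_flip k (u v : valuation k) a : a \in D u v -> D (flip u a) v = D u v :\ a.
Proof.
rewrite inE => Ha; apply/setP => x; rewrite !inE in_flip.
case: (eqVneq x a) => [->|_] /=; last by case: (x \in u).
by move: Ha; case: (a \in u); case: (a \in v).
Qed.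

Lemma D_sym k (u v : valuation k) : D u v = D v u.
Proof. by apply/setP => x; rewrite !inE eq_sym. Qed.

Lemma D_refl k (u : valuation k) : D u u = set0.
Proof. by apply/setP => x; rewrite !inE eqxx. Qed.

Lemma D0 k (u v : valuation k) : D u v = set0 -> u = v.
Proof.
move=> H; apply/setP => x; have: x \notin D u v by rewrite H inE.
by rewrite inE negbK => /eqP.
Qed.

Lemma D_neq k (u v : valuation k) : u != v -> (0 < #|D u v|)%N.
Proof.
move=> H; rewrite card_gt0; apply/eqP => H0; by rewrite (D0 H0) eqxx in H.
Qed.

Definition sg k (nu : valuation k) : int := (-1) ^+ #|nu|.

Lemma sg_flip k (u : valuation k) a : sg (flip u a) = - sg u.
Proof.
rewrite /sg /flip; case: ifP => Ha.
  by rewrite [in RHS](cardsD1 a u) Ha add1n exprS mulN1r opprK.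
by rewrite cardsU1 Ha add1n exprS mulN1r.
Qed.

Lemma sgD k n : forall (u v : valuation k), #|D u v| = n -> sg v = sg u * (-1) ^+ n.
Proof.
elim: n => [|n IH] u v H.
  by move/eqP: H; rewrite cards_eq0 => /eqP /D0 ->; rewrite expr0 mulr1.
have: (0 < #|D u v|)%N by rewrite H.
case/card_gt0P => a Ha.
have H' : #|D (flip u a) v| = n.
  by rewrite D_flip //; move: H; rewrite (cardsD1 a) Ha add1n => -[].
by rewrite (IH _ _ H') sg_flip exprS mulN1r mulrN mulNr.
Qed.

Lemma sg_pm k (u : valuation k) : sg u = (-1) ^+ odd #|u|.
Proof. by rewrite /sg signr_odd. Qed.

Lemma sg_eq k (u v : valuation k) : (sg u == sg v) = ~~ odd #|D u v|.
Proof.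
rewrite (@sgD k _ u v (erefl _)) -signr_odd sg_pm.
by case: (odd #|D u v|); case: (odd #|u|).
Qed.

Lemma sg_neq0 k (u : valuation k) : sg u != 0.
Proof. by rewrite sg_pm; case: (odd #|u|). Qed.

Lemma sg_neq k (u v : valuation k) : sg u != sg v -> sg v = - sg u.
Proof. by rewrite !sg_pm; case: (odd #|u|); case: (odd #|v|). Qed.

Definition mk k (S : {set valuation k}) : boolfun k := [ffun nu => nu \in S].
Lemma sat_mk k (S : {set valuation k}) : sat (mk S) = S.
Proof. by apply/setP => x; rewrite /sat inE ffunE. Qed.
Lemma mk_sat k (phi : boolfun k) : mk (sat phi) = phi.
Proof. by apply/ffunP => x; rewrite ffunE /sat inE. Qed.

Definition R k (S T : {set valuation k}) := equiv_bf (mk S) (mk T).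

Lemma equiv_sym k (phi psi : boolfun k) : equiv_bf phi psi -> equiv_bf psi phi.
Proof.
elim => [x y [nu [l H]]|x|x y z _ H1 _ H2].
- by apply: rt_step; exists nu, l; tauto.
- exact: rt_refl.
- exact: rt_trans H2 H1.
Qed.

Lemma R_sym k (S T : {set valuation k}) : R S T -> R T S.
Proof. exact: equiv_sym. Qed.
Lemma R_trans k (S T U : {set valuation k}) : R S T -> R T U -> R S U.
Proof. exact: rt_trans. Qed.

Definition eulS k (S : {set valuation k}) := \sum_(x in S) sg x.

Lemma step_eul k (phi psi : boolfun k) nu l : step_plus phi psi nu l -> eul psi = eul phi.
Proof.
case=> H1 [H2 H3]; rewrite /eul H3 setUC -setUA big_setU1 /=; last first.
  by rewrite !inE negb_or eq_sym flip_neq; move: H1; rewrite /sat inE.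
rewrite big_setU1 //= addrA.
by have := sg_flip nu l; rewrite /sg => ->; rewrite addrN add0r.
Qed.

Lemma equiv_eul k (phi psi : boolfun k) : equiv_bf phi psi -> eul phi = eul psi.
Proof.
elim => [x y [nu [l [H|H]]]|x|x y z _ H1 _ H2].
- by rewrite (step_eul H).
- by rewrite (step_eul H).
- by [].
- by rewrite H1 H2.
Qed.

Lemma R_eul k (S T : {set valuation k}) : R S T -> eulS S = eulS T.
Proof. by move/equiv_eul; rewrite /eul !sat_mk. Qed.

Lemma addpair k (S : {set valuation k}) u l :
  u \notin S -> flip u l \notin S -> R S (S :|: [set u; flip u l]).
Proof. by move=> H1 H2; apply: rt_step; exists u, l; left; rewrite /step_plus !sat_mk. Qed.

Lemma rempair k (S : {set valuation k}) u l :
  u \in S -> flip u l \in S -> R S (S :\: [set u; flip u l]).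
Proof.
move=> H1 H2; set S' := S :\: _.
have E : S' :|: [set u; flip u l] = S.
  apply/setP => x; rewrite !inE; case: (eqVneq x u) => [->|_]; rewrite ?H1 ?orbT //=.
  by case: (eqVneq x (flip u l)) => [->|_]; rewrite ?H2 ?orbT ?orbF ?andbT.
apply: R_sym; rewrite -[X in R _ X]E; by apply: addpair; rewrite !inE ?eqxx ?orbT.
Qed.

Ltac simp_hyps := repeat match goal with
 | H : is_true (?a != ?b) |- context [?a == ?b] => rewrite (negbTE H)
 | H : is_true (?a != ?b) |- context [?b == ?a] => rewrite (eq_sym b a) (negbTE H)
 | H : is_true (?a \in ?S) |- context [?a \in ?S] => rewrite H
 | H : is_true (?a \notin ?S) |- context [?a \in ?S] => rewrite (negbTE H)
 end.
Ltac setsolve := apply/setP => ?; rewrite !inE;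
  repeat (simp_hyps; rewrite ?eqxx /=;
   match goal with |- context [?z == ?b] => case: (eqVneq z b) => [->|?] end);
  simp_hyps; rewrite ?eqxx /=; try done; try (case: (_ \in _); done).
Lemma E1 (T : finType) (S : {set T}) u w x : w != u -> x != w -> x != u -> x \notin S -> w \in S -> u \in S ->
 (S :\: [set u; w]) :|: [set w; x] = x |: (S :\ u).
Proof. move=> *. setsolve. Qed.
Lemma E2 (T : finType) (S : {set T}) u w x : w != u -> x != w -> x != u -> x \notin S -> w \notin S -> u \in S ->
 (S :|: [set w; x]) :\: [set u; w] = x |: (S :\ u).
Proof. move=> *. setsolve. Qed.

Lemma swap2 k (S : {set valuation k}) u a b : a != b -> u \in S ->
  flip (flip u a) b \notin S -> R S (flip (flip u a) b |: (S :\ u)).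
Proof.
move=> ab uS xS.
have wu : flip u a != u by apply: flip_neq.
have xw : flip (flip u a) b != flip u a by apply: flip_neq.
have xu : flip (flip u a) b != u by apply: flip2_neq.
case: (boolP (flip u a \in S)) => wS.
  apply: R_trans (rempair uS wS) _.
  rewrite -(E1 wu xw xu xS wS uS); apply: addpair; rewrite !inE ?eqxx ?orbT /= ?(negbTE xS) ?andbF //.
apply: R_trans (addpair wS xS) _.
rewrite -(E2 wu xw xu xS wS uS); apply: rempair; rewrite !inE ?eqxx ?orbT ?uS //.
Qed.

Lemma pick2 k (u v : valuation k) n : #|D u v| = n.+2 ->
  exists a b, a != b /\ #|D (flip (flip u a) b) v| = n.
Proof.
move=> H; have: (1 < #|D u v|)%N by rewrite H.
case/card_gt1P => a [b [Ha Hb ab]]; exists a, b; split => //.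
have Hb' : b \in D (flip u a) v by rewrite (D_flip Ha) in_setD1 eq_sym ab Hb.
rewrite (D_flip Hb') (D_flip Ha).
move: H; rewrite (cardsD1 a) Ha (cardsD1 b (D u v :\ a)) in_setD1 eq_sym ab Hb /=.
by rewrite !add1n => -[].
Qed.

Lemma neq_mem (T : finType) (S : {set T}) u v : u \in S -> v \notin S -> u != v.
Proof. by move=> uS vS; apply/eqP => e; move: vS; rewrite -e uS. Qed.

Lemma E3 (T : finType) (S : {set T}) u v x : x \in S -> u != v -> x != v -> x != u -> u \in S -> v \notin S ->
  x |: ((v |: (S :\ x)) :\ u) = v |: (S :\ u).
Proof. move=> *. setsolve. Qed.
Lemma E4 (T : finType) (S : {set T}) u v x : x \notin S -> x != u -> v != x ->
  v |: ((x |: (S :\ u)) :\ x) = v |: (S :\ u).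
Proof. move=> *. setsolve. Qed.

Lemma swapn k n : forall (S : {set valuation k}) u v, #|D u v| = (n.+1).*2 ->
  u \in S -> v \notin S -> R S (v |: (S :\ u)).
Proof.
elim: n => [|n IH] S u v HD uS vS.
  have [a [b [ab Hx]]] := pick2 HD.
  move/eqP: Hx; rewrite cards_eq0 => /eqP /D0 Hx.
  by rewrite -Hx; apply: swap2 => //; rewrite Hx.
have HD' : #|D u v| = ((n.+1).*2).+2 by rewrite HD.
have [a [b [ab Hx]]] := pick2 HD'.
have xv : flip (flip u a) b != v.
  by apply/eqP => e; move: Hx; rewrite e D_refl cards0.
have xu : flip (flip u a) b != u by apply: flip2_neq.
have uv := neq_mem uS vS.
case: (boolP (flip (flip u a) b \in S)) => xS.
  apply: R_trans (IH _ _ _ Hx xS vS) _.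
  rewrite -(E3 xS uv xv xu uS vS); apply: swap2 => //.
    by rewrite !inE (negbTE uv) eq_sym (negbTE xu) uS.
  by rewrite !inE (negbTE xv) eqxx.
apply: R_trans (swap2 ab uS xS) _.
rewrite -(@E4 _ _ _ v _ xS xu); last by rewrite eq_sym.
apply: IH => //; first by rewrite !inE eqxx.
by rewrite !inE negb_or eq_sym xv /= negb_and vS orbT.
Qed.

Lemma E5 (T : finType) (S : {set T}) u v w : w \in S -> w != u -> w != v -> u != v ->
  w |: ((S :\: [set u; w]) :\ v) = S :\: [set u; v].
Proof. move=> *. setsolve. Qed.
Lemma E6 (T : finType) (S : {set T}) u v w : w \notin S -> w != u -> w != v -> u != v ->
  (w |: (S :\ v)) :\: [set u; w] = S :\: [set u; v].
Proof. move=> *. setsolve. Qed.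
Lemma E7 (T : finType) (S : {set T}) u v : u \notin S -> v \notin S ->
  (S :|: [set u; v]) :\: [set u; v] = S.
Proof. move=> *. setsolve. Qed.

Lemma cancelp k (S : {set valuation k}) u v : u \in S -> v \in S -> odd #|D u v| ->
  R S (S :\: [set u; v]).
Proof.
move=> uS vS Hodd.
have uv : u != v by apply/eqP => e; move: Hodd; rewrite e D_refl cards0.
have [m Hn] : exists m, #|D u v| = m.*2.+1.
  by exists (#|D u v|./2); rewrite -[in LHS](odd_double_half #|D u v|) Hodd add1n.
have: (0 < #|D u v|)%N by rewrite Hn.
case/card_gt0P => a Ha.
have HDw : #|D (flip u a) v| = m.*2.
  by rewrite D_flip //; move: Hn; rewrite (cardsD1 a) Ha add1n => -[].
case: (eqVneq (flip u a) v) => [wv|wv].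
  by rewrite -wv; apply: rempair => //; rewrite wv.
have wu : flip u a != u by apply: flip_neq.
case: m Hn HDw => [|m] Hn HDw.
  by move/eqP: HDw; rewrite cards_eq0 => /eqP /D0 e; rewrite e eqxx in wv.
have HD' : #|D v (flip u a)| = m.+1.*2 by rewrite D_sym.
case: (boolP (flip u a \in S)) => wS.
  apply: R_trans (rempair uS wS) _.
  rewrite -(E5 wS wu wv uv); apply: swapn HD' _ _.
    by rewrite !inE negb_or (eq_sym v) (negbTE uv) eq_sym wv.
  by rewrite !inE eqxx orbT.
apply: R_trans (swapn HD' vS wS) _.
rewrite -(E6 wS wu wv uv); apply: rempair.
  by rewrite !inE (negbTE uv) uS orbT.
by rewrite !inE eqxx.
Qed.

Lemma createp k (S : {set valuation k}) u v : u \notin S -> v \notin S -> odd #|D u v| ->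
  R S (S :|: [set u; v]).
Proof.
move=> uS vS Hodd; apply: R_sym.
have := @cancelp k (S :|: [set u; v]) u v.
rewrite (E7 uS vS); apply; rewrite ?Hodd // !inE eqxx ?orbT //.
Qed.

Lemma final k (S T : {set valuation k}) : eulS S = eulS T ->
  (forall u v, u \in S :\: T -> v \in S :\: T -> sg u = sg v) ->
  (forall u v, u \in T :\: S -> v \in T :\: S -> sg u = sg v) ->
  (forall u v, u \in S :\: T -> v \in T :\: S -> sg u != sg v) -> S = T.
Proof.
move=> He H1 H2 H3.
have He' : \sum_(x in S :\: T) sg x = \sum_(x in T :\: S) sg x.
  move: He; rewrite /eulS (@big_setID _ _ _ _ S T) (@big_setID _ _ _ _ T S) setIC; exact: addrI.
case: (eqVneq (S :\: T) set0) => [A0|/set0Pn [u Hu]].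
  case: (eqVneq (T :\: S) set0) => [B0|/set0Pn [v Hv]].
    apply/eqP; rewrite eqEsubset -!setD_eq0 A0 B0 !eqxx //.
  exfalso; move: He'; rewrite A0 big_set0.
  rewrite (eq_bigr (fun _ => sg v)); last by move=> x Hx; apply: H2.
  rewrite sumr_const => /esym /eqP; rewrite mulrn_eq0 (negbTE (sg_neq0 v)) orbF.
  by rewrite cards_eq0 => /eqP B0; rewrite B0 inE in Hv.
exfalso; move: He'.
rewrite (eq_bigr (fun _ => sg u)); last by move=> x Hx; apply: H1.
rewrite [in RHS](eq_bigr (fun _ => - sg u)); last first.
  by move=> x Hx; apply: sg_neq; apply: H3.
rewrite !sumr_const mulNrn => /eqP; rewrite -subr_eq0 opprK -mulrnDr.
rewrite mulrn_eq0 (negbTE (sg_neq0 u)) orbF addn_eq0 cards_eq0.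
by move=> /andP [/eqP A0 _]; rewrite A0 inE in Hu.
Qed.

Ltac bsolve := rewrite ?inE;
  repeat (simp_hyps; rewrite ?eqxx /=;
   match goal with |- context [?z == ?b] => case: (eqVneq z b) => [->|?] end);
  simp_hyps; rewrite ?eqxx /=; try done;
  repeat (match goal with |- context [?a \in ?B] => case: (a \in B) end); done.

Lemma meas_lt (T : finType) (A A' B B' : {set T}) : A' \subset A -> B' \subset B ->
  (A' \proper A) || (B' \proper B) -> (#|A'| + #|B'| < #|A| + #|B|)%N.
Proof.
move=> sA sB /orP [] /proper_card H.
  by have := subset_leq_card sB; lia.
by have := subset_leq_card sA; lia.
Qed.

Lemma M_cancel (T : finType) (S T0 : {set T}) u v : u \in S -> u \notin T0 -> v \in S -> v \notin T0 ->
  (#|(S :\: [set u; v]) :\: T0| + #|T0 :\: (S :\: [set u; v])| < #|S :\: T0| + #|T0 :\: S|)%N.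
Proof.
move=> *; apply: meas_lt.
- by apply/subsetP => y; bsolve.
- by apply/subsetP => y; bsolve.
- apply/orP; left; apply/properP; split; first by apply/subsetP => y; bsolve.
  by exists u; bsolve.
Qed.

Lemma M_create (T : finType) (S T0 : {set T}) u v : u \notin S -> u \in T0 -> v \notin S -> v \in T0 ->
  (#|(S :|: [set u; v]) :\: T0| + #|T0 :\: (S :|: [set u; v])| < #|S :\: T0| + #|T0 :\: S|)%N.
Proof.
move=> *; apply: meas_lt.
- by apply/subsetP => y; bsolve.
- by apply/subsetP => y; bsolve.
- apply/orP; right; apply/properP; split; first by apply/subsetP => y; bsolve.
  by exists u; bsolve.
Qed.

Lemma M_swap (T : finType) (S T0 : {set T}) u v : u \in S -> u \notin T0 -> v \notin S -> v \in T0 ->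
  (#|(v |: (S :\ u)) :\: T0| + #|T0 :\: (v |: (S :\ u))| < #|S :\: T0| + #|T0 :\: S|)%N.
Proof.
move=> uS uT vS vT; have uv := neq_mem uS vS; apply: meas_lt.
- by apply/subsetP => y; bsolve.
- by apply/subsetP => y; bsolve.
- apply/orP; left; apply/properP; split; first by apply/subsetP => y; bsolve.
  by exists u; bsolve.
Qed.

Lemma mainR k n : forall (S T : {set valuation k}),
  (#|S :\: T| + #|T :\: S| <= n)%N -> eulS S = eulS T -> R S T.
Proof.
elim: n => [|n IH] S T Hn He.
  move: Hn; rewrite leqn0 addn_eq0 !cards_eq0 => /andP [A0 B0].
  have -> : S = T by apply/eqP; rewrite eqEsubset -!setD_eq0 A0 B0.
  exact: rt_refl.
have step : forall S', R S S' ->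
    (#|S' :\: T| + #|T :\: S'| < #|S :\: T| + #|T :\: S|)%N -> R S T.
  move=> S' H1 H2; apply: (R_trans (T:=S')); first exact: H1.
  apply: IH.
    by rewrite -ltnS; apply: leq_trans H2 Hn.
  by rewrite -(R_eul H1).
destruct (classic (exists u v, u \in S :\: T /\ v \in S :\: T /\ sg u != sg v))
  as [[u [v [Hu [Hv Huv]]]]|N1].
  move: Hu Hv; rewrite !inE => /andP [uT uS] /andP [vT vS].
  apply: (step _ (cancelp uS vS _)); last exact: M_cancel.
  by rewrite -[odd _]negbK -sg_eq.
destruct (classic (exists u v, u \in T :\: S /\ v \in T :\: S /\ sg u != sg v))
  as [[u [v [Hu [Hv Huv]]]]|N2].
  move: Hu Hv; rewrite !inE => /andP [uS uT] /andP [vS vT].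
  apply: (step _ (createp uS vS _)); last exact: M_create.
  by rewrite -[odd _]negbK -sg_eq.
destruct (classic (exists u v, u \in S :\: T /\ v \in T :\: S /\ sg u == sg v))
  as [[u [v [Hu [Hv Huv]]]]|N3].
  move: Hu Hv; rewrite !inE => /andP [uT uS] /andP [vS vT].
  have uv := neq_mem uS vS.
  have Hev : ~~ odd #|D u v| by rewrite -sg_eq.
  have Hpos := D_neq uv.
  have [m Hm] : exists m, #|D u v| = m.+1.*2.
    exists (#|D u v|./2).-1; rewrite prednK.
      by rewrite -[in LHS](odd_double_half #|D u v|) (negbTE Hev).
    move: Hpos Hev; rewrite -[in X in (0 < X)%N -> _](odd_double_half #|D u v|).
    by case: (odd _) => //=; rewrite add0n double_gt0.
  apply: (step _ (swapn Hm uS vS)); exact: M_swap.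
have -> : S = T.
  apply: final => //.
  - move=> u v Hu Hv; case: (eqVneq (sg u) (sg v)) => // Hne.
    by exfalso; apply: N1; exists u, v.
  - move=> u v Hu Hv; case: (eqVneq (sg u) (sg v)) => // Hne.
    by exfalso; apply: N2; exists u, v.
  - move=> u v Hu Hv; apply/negP => Heq.
    by apply: N3; exists u, v.
exact: rt_refl.
Qed.

Unset Implicit Arguments.
Local Close Scope ring_scope.

Theorem proposition6p1 (k : nat) (hk : (1 <= k)%N) (phi phi' : boolfun k) :
  eul phi = eul phi' <-> equiv_bf phi phi'.
Proof.
split; last exact: equiv_eul.
move=> He; rewrite -(mk_sat phi) -(mk_sat phi').
apply: (@mainR k _ _ _ (leqnn _)); exact: He.
Qed.
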